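(* Let $\mathcal{A}$ be a computably enumerable set of axioms (coded as natural numbers). Define $C\subseteq\omega$ by $$y\in C \iff \exists l\in\omega\ \exists \sigma\subseteq C\ \bigl[(l,\sigma,y)\in\mathcal{A}\bigr],$$ where $\sigma\subseteq C$ means that $\sigma$ agrees with the characteristic function of $C$ on $\mathrm{dom}\,\sigma$. Then $C$ is well defined and is $\mathrm{REA}[\omega]$.
   Context: Let $\langle x,y\rangle$ denote a standard computable pairing function; $\omega^{[<l]}=\{\langle m,y\rangle: m<l\}$ and $\omega^{[\ge l]}=\{\langle m,y\rangle: m\ge l\}$. An axiom is a triple $(l,\sigma,y)$ where $l\in\omega$, $\sigma$ is a function from a finite subset of $\omega^{[<l]}$ to $\{0,1\}$, and $y\in\omega^{[\ge l]}$. For $X\subseteq\omega$, $X^{[n]}=\{y:\langle n,y\rangle\in X\}$ and $X^{[<n]}=\{\langle m,y\rangle\in X:m<n\}$. $W_e^Z$ is the $e$-th set c.e. relative to $Z$. A set $C$ is $\mathrm{REA}[\omega]$ iff there is a computable function $f$ such that for every $n$, $C^{[n]}=W^{C^{[<n]}}_{f(n)}$. *)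

(* Defs.v *)
From HB Require Import structures.
From mathcomp Require Import all_boot.
Set Implicit Arguments. Unset Strict Implicit. Unset Printing Implicit Defensive.

Definition pair (x y : nat) : nat := ((x + y) * (x + y).+1) %/ 2 + y.

Inductive prog : Type :=
| PZero
| PSucc
| PId
| PFst
| PSnd
| POracle
| PComp of prog & prog
| PPair of prog & prog
| PRec of prog & prog
| PMu of prog.

Inductive eval (Z : nat -> Prop) : prog -> nat -> nat -> Prop :=
| ev_zero x : eval Z PZero x 0
| ev_succ x : eval Z PSucc x x.+1
| ev_id x : eval Z PId x x
| ev_fst a b : eval Z PFst (pair a b) a
| ev_snd a b : eval Z PSnd (pair a b) b
| ev_orac1 x : Z x -> eval Z POracle x 1
| ev_orac0 x : ~ Z x -> eval Z POracle x 0
| ev_comp f g x w v : eval Z g x w -> eval Z f w v -> eval Z (PComp f g) x v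
| ev_pair f g x v w : eval Z f x v -> eval Z g x w -> eval Z (PPair f g) x (pair v w)
| ev_rec0 f g a v : eval Z f a v -> eval Z (PRec f g) (pair a 0) v
| ev_recS f g a n w v : eval Z (PRec f g) (pair a n) w ->
    eval Z g (pair a (pair n w)) v -> eval Z (PRec f g) (pair a n.+1) v
| ev_mu f a n : eval Z f (pair a n) 0 ->
    (forall m, m < n -> exists k, eval Z f (pair a m) k.+1) ->
    eval Z (PMu f) a n.

Fixpoint prog_enc (p : prog) : GenTree.tree nat :=
  match p with
  | PZero => GenTree.Node 0 [::]
  | PSucc => GenTree.Node 1 [::]
  | PId => GenTree.Node 2 [::]
  | PFst => GenTree.Node 3 [::]
  | PSnd => GenTree.Node 4 [::]
  | POracle => GenTree.Node 5 [::]
  | PComp f g => GenTree.Node 6 [:: prog_enc f; prog_enc g]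
  | PPair f g => GenTree.Node 7 [:: prog_enc f; prog_enc g]
  | PRec f g => GenTree.Node 8 [:: prog_enc f; prog_enc g]
  | PMu f => GenTree.Node 9 [:: prog_enc f]
  end.

Fixpoint prog_dec (t : GenTree.tree nat) : option prog :=
  match t with
  | GenTree.Leaf _ => None
  | GenTree.Node 0 [::] => Some PZero
  | GenTree.Node 1 [::] => Some PSucc
  | GenTree.Node 2 [::] => Some PId
  | GenTree.Node 3 [::] => Some PFst
  | GenTree.Node 4 [::] => Some PSnd
  | GenTree.Node 5 [::] => Some POracle
  | GenTree.Node 6 [:: t1; t2] =>
      if (prog_dec t1, prog_dec t2) is (Some f, Some g) then Some (PComp f g) else None
  | GenTree.Node 7 [:: t1; t2] =>
      if (prog_dec t1, prog_dec t2) is (Some f, Some g) then Some (PPair f g) else None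
  | GenTree.Node 8 [:: t1; t2] =>
      if (prog_dec t1, prog_dec t2) is (Some f, Some g) then Some (PRec f g) else None
  | GenTree.Node 9 [:: t1] =>
      if prog_dec t1 is Some f then Some (PMu f) else None
  | _ => None
  end.

Lemma prog_encK : pcancel prog_enc prog_dec.
Proof. by elim=> //= [f -> g -> | f -> g -> | f -> g -> | f ->]. Qed.

HB.instance Definition _ := Countable.copy prog (pcan_type prog_encK).

Definition phi (e : nat) : prog := odflt PZero (unpickle e).

Definition W (e : nat) (Z : nat -> Prop) : nat -> Prop :=
  fun x => exists v, eval Z (phi e) x v.

Definition empty_oracle : nat -> Prop := fun _ => False.

Definition ce (A : nat -> Prop) : Prop :=
  exists e, forall x, A x <-> W e empty_oracle x.

Definition computable (f : nat -> nat) : Prop :=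
  exists e, forall n, eval empty_oracle (phi e) n (f n).

Definition col_lt (l : nat) : nat -> Prop := fun x => exists m y, x = pair m y /\ m < l.
Definition col_ge (l : nat) : nat -> Prop := fun x => exists m y, x = pair m y /\ l <= m.
Definition column (X : nat -> Prop) (n : nat) : nat -> Prop := fun y => X (pair n y).
Definition below (X : nat -> Prop) (n : nat) : nat -> Prop := fun x => X x /\ col_lt n x.

(* a finite partial function sigma from a finite subset of omega to {0,1}
   is given by a list of (argument, value) pairs with distinct arguments *)
Definition valid_axiom (l : nat) (sigma : seq (nat * bool)) (y : nat) : Prop :=
  uniq (unzip1 sigma) /\ (forall x b, (x, b) \in sigma -> col_lt l x) /\ col_ge l y.

Fixpoint fun_code (sigma : seq (nat * bool)) : nat :=
  match sigma with
  | [::] => 0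
  | (x, b) :: s => (pair (pair x (nat_of_bool b)) (fun_code s)).+1
  end.

Definition axiom_code (l : nat) (sigma : seq (nat * bool)) (y : nat) : nat :=
  pair l (pair (fun_code sigma) y).

Definition agrees (sigma : seq (nat * bool)) (C : nat -> Prop) : Prop :=
  forall x b, (x, b) \in sigma -> (C x <-> b = true).

Definition generated_by (A : nat -> Prop) (C : nat -> Prop) : Prop :=
  forall y, C y <-> exists l sigma, A (axiom_code l sigma y) /\ agrees sigma C.

Definition REA_omega (C : nat -> Prop) : Prop :=
  exists f, computable f /\
    forall n y, column C n y <-> W (f n) (below C n) y.

(* Main.v *)
Require Import Defs.
From mathcomp Require Import all_boot zify.
From Stdlib Require Import Classical ClassicalEpsilon.
Set Implicit Arguments. Unset Strict Implicit. Unset Printing Implicit Defensive.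

Definition tri (s : nat) := (s * s.+1) %/ 2.

Lemma pairE x y : pair x y = tri (x + y) + y.
Proof. by []. Qed.

Lemma triS s : tri s.+1 = tri s + s.+1.
Proof.
rewrite /tri.
have -> : s.+1 * s.+2 = s * s.+1 + s.+1 * 2 by rewrite !mulSn !mulnS; lia.
by rewrite divnDr ?dvdn_mull // mulnK.
Qed.

Lemma tri_mono s t : s <= t -> tri s <= tri t.
Proof.
elim: t => [|t IH]; first by rewrite leqn0 => /eqP->.
rewrite leq_eqVlt => /orP[/eqP->//|]; rewrite ltnS => /IH.
rewrite triS; lia.
Qed.

Lemma pair_lt a b c d : a + b < c + d -> pair a b < pair c d.
Proof.
move=> H; rewrite !pairE.
have := tri_mono H; rewrite triS; lia.
Qed.

Lemma pair_inj a b c d : pair a b = pair c d -> a = c /\ b = d.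
Proof.
move=> E.
have Hs : a + b = c + d.
  case: (ltngtP (a + b) (c + d)) => // H.
  - by move: (pair_lt H); rewrite E ltnn.
  - by move: (pair_lt H); rewrite E ltnn.
move: E; rewrite !pairE Hs => /addnI Hbd; split; lia.
Qed.

Definition ustep (p : nat * nat) : nat * nat :=
  if p.1 is a.+1 then (a, p.2.+1) else (p.2.+1, 0).
Definition unpair (x : nat) : nat * nat := iter x ustep (0, 0).
Definition fst' x := (unpair x).1.
Definition snd' x := (unpair x).2.

Lemma pair_ustep p : pair (ustep p).1 (ustep p).2 = (pair p.1 p.2).+1.
Proof.
case: p => [[|a] b] /=; rewrite !pairE.
- by rewrite ?addn0 ?add0n triS; lia.
- have -> : a + b.+1 = (a + b).+1 by lia. by rewrite addSn addnS.
Qed.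

Lemma pair_unpair x : pair (fst' x) (snd' x) = x.
Proof.
rewrite /fst' /snd' /unpair; elim: x => [|x IH] //=.
by rewrite pair_ustep IH.
Qed.

Lemma unpair_pair a b : unpair (pair a b) = (a, b).
Proof.
have := pair_unpair (pair a b); move=> /pair_inj [h1 h2].
by rewrite /fst' /snd' in h1 h2; case: (unpair _) h1 h2 => ? ? /= -> ->.
Qed.
Lemma fst'_pair a b : fst' (pair a b) = a.
Proof. by rewrite /fst' unpair_pair. Qed.
Lemma snd'_pair a b : snd' (pair a b) = b.
Proof. by rewrite /snd' unpair_pair. Qed.

Lemma pair_geq_r a b : b <= pair a b.
Proof. rewrite pairE; lia. Qed.
Lemma pair_geq_l a b : a <= pair a b.
Proof.
rewrite pairE; have: a + b <= tri (a + b) + b; last lia.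
elim: (a + b) => [|s IH] //; rewrite triS; lia.
Qed.
Lemma pair00 : pair 0 0 = 0. Proof. by []. Qed.
Lemma fst'0 : fst' 0 = 0. Proof. by []. Qed.
Lemma snd'0 : snd' 0 = 0. Proof. by []. Qed.

Definition orc (Z : nat -> Prop) (x : nat) : nat :=
  if excluded_middle_informative (Z x) then 1 else 0.

Lemma ev_conv Z p x v w : eval Z p x v -> v = w -> eval Z p x w.
Proof. by move=> H <-. Qed.

Lemma ev_fst' Z x : eval Z PFst x (fst' x).
Proof. rewrite -{1}(pair_unpair x); constructor. Qed.
Lemma ev_snd' Z x : eval Z PSnd x (snd' x).
Proof. rewrite -{1}(pair_unpair x); constructor. Qed.
Lemma ev_orc Z x : eval Z POracle x (orc Z x).
Proof. rewrite /orc; case: excluded_middle_informative => h; by constructor. Qed.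

Lemma inv_fst Z x v : eval Z PFst x v -> v = fst' x.
Proof. by inversion 1; rewrite fst'_pair. Qed.
Lemma inv_snd Z x v : eval Z PSnd x v -> v = snd' x.
Proof. by inversion 1; rewrite snd'_pair. Qed.
Lemma inv_orc Z x v : eval Z POracle x v -> v = orc Z x.
Proof.
inversion 1; subst; rewrite /orc; case: excluded_middle_informative => //.
Qed.
Lemma inv_comp Z f g x v : eval Z (PComp f g) x v -> exists w, eval Z g x w /\ eval Z f w v.
Proof. inversion 1; eauto. Qed.
Lemma inv_pair Z f g x v : eval Z (PPair f g) x v ->
  exists a b, [/\ eval Z f x a, eval Z g x b & v = pair a b].
Proof. inversion 1; subst; do 2 eexists; split; eauto. Qed.
Lemma inv_rec Z f g a n v : eval Z (PRec f g) (pair a n) v ->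
  (n = 0 /\ eval Z f a v) \/
  (exists k w, [/\ n = k.+1, eval Z (PRec f g) (pair a k) w & eval Z g (pair a (pair k w)) v]).
inversion 1; subst; match goal with h : pair _ _ = pair _ _ |- _ => move: h => /pair_inj [? ?]; subst end.
- by left.
- right; do 2 eexists; split; eauto.
Qed.
Lemma inv_mu Z f a n : eval Z (PMu f) a n ->
  eval Z f (pair a n) 0 /\ (forall m, m < n -> exists k, eval Z f (pair a m) k.+1).
Proof. by inversion 1. Qed.

Lemma eval_det Z p : forall x v1 v2, eval Z p x v1 -> eval Z p x v2 -> v1 = v2.
Proof.
elim: p => [||||||f IHf g IHg|f IHf g IHg|f IHf g IHg|f IHf] x v1 v2.
- by do 2 inversion 1.
- by do 2 inversion 1.
- by do 2 inversion 1.
- by move=> /inv_fst -> /inv_fst ->.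
- by move=> /inv_snd -> /inv_snd ->.
- by move=> /inv_orc -> /inv_orc ->.
- move=> /inv_comp [w1 [h1 h1']] /inv_comp [w2 [h2 h2']].
  have e := IHg _ _ _ h1 h2; subst; exact: IHf _ _ _ h1' h2'.
- move=> /inv_pair [a1 [b1 [h1 h1' ->]]] /inv_pair [a2 [b2 [h2 h2' ->]]].
  by rewrite (IHf _ _ _ h1 h2) (IHg _ _ _ h1' h2').
- rewrite -(pair_unpair x); move: (fst' x) (snd' x) => a n.
  elim: n v1 v2 => [|n IHn] v1 v2.
  + move=> /inv_rec [[_ h1]|[k [w [//]]]] /inv_rec [[_ h2]|[k [w [//]]]].
    exact: IHf _ _ _ h1 h2.
  + move=> /inv_rec [[//]|[k [w [[<-] h1 h1']]]] /inv_rec [[//]|[k' [w' [[<-] h2 h2']]]].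
    have e := IHn _ _ h1 h2; subst; exact: IHg _ _ _ h1' h2'.
- move=> /inv_mu [h1 h1'] /inv_mu [h2 h2'].
  case: (ltngtP v1 v2) => // H.
  + by case: (h2' _ H) => k /(IHf _ _ _ h1).
  + by case: (h1' _ H) => k /(IHf _ _ _ h2).
Qed.

Definition comp2 h f g := PComp h (PPair f g).
Fixpoint Kc (n : nat) : prog := if n is k.+1 then PComp PSucc (Kc k) else PZero.

Lemma ev_comp2 Z h f g x a b c : eval Z f x a -> eval Z g x b ->
  eval Z h (pair a b) c -> eval Z (comp2 h f g) x c.
Proof. move=> ha hb hc; econstructor; [econstructor; eauto| exact hc]. Qed.

Lemma ev_Kc Z n x : eval Z (Kc n) x n.
Proof. elim: n => [|n IH] /=; [constructor | econstructor; [exact IH|constructor]]. Qed.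

Fixpoint recf (F : nat -> nat) (G : nat -> nat -> nat -> nat) a n :=
  if n is k.+1 then G a k (recf F G a k) else F a.

Lemma ev_rec_gen Z f g F G :
  (forall a, eval Z f a (F a)) ->
  (forall a k w, eval Z g (pair a (pair k w)) (G a k w)) ->
  forall a n, eval Z (PRec f g) (pair a n) (recf F G a n).
Proof.
move=> hf hg a; elim=> [|n IH] /=; first by constructor.
by econstructor; [exact IH| exact: hg].
Qed.

Create HintDb evdb.
#[export] Hint Resolve ev_zero ev_succ ev_id ev_fst' ev_snd' ev_orc ev_Kc : evdb.
#[export] Hint Extern 2 (eval _ (comp2 _ _ _) _ _) => eapply ev_comp2 : evdb.
#[export] Hint Extern 3 (eval _ (PComp _ _) _ _) => eapply ev_comp : evdb.
#[export] Hint Extern 3 (eval _ (PPair _ _) _ _) => eapply ev_pair : evdb.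

Ltac pr := repeat first [rewrite fst'_pair | rewrite snd'_pair].
Ltac evs := eapply ev_conv; [solve [eauto 40 with evdb] | pr; try lia; try done].

Definition P22 := PComp PSnd PSnd.
Definition P21 := PComp PFst PSnd.

Definition addP := PRec PId (PComp PSucc P22).
Lemma ev_add Z a n : eval Z addP (pair a n) (a + n).
Proof.
eapply ev_conv.
  apply: (ev_rec_gen (F := id) (G := fun a k w => w.+1)) => *; rewrite /P22; evs.
by elim: n => /= [|n ->]; lia.
Qed.
#[export] Hint Resolve ev_add : evdb.

Definition mulP := PRec PZero (comp2 addP P22 PFst).
Lemma ev_mul Z a n : eval Z mulP (pair a n) (a * n).
Proof.
eapply ev_conv.
  apply: (ev_rec_gen (F := fun=> 0) (G := fun a k w => w + a)) => *; rewrite /P22; evs.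
by elim: n => /= [|n ->]; lia.
Qed.
#[export] Hint Resolve ev_mul : evdb.

Definition predP := PComp (PRec PZero P21) (PPair PZero PId).
Lemma ev_pred Z x : eval Z predP x x.-1.
Proof.
econstructor; first by econstructor; constructor.
eapply ev_conv.
  apply: (ev_rec_gen (F := fun=> 0) (G := fun a k w => k)) => *; rewrite /P21; evs.
by case: x.
Qed.
#[export] Hint Resolve ev_pred : evdb.

Definition subP := PRec PId (PComp predP P22).
Lemma ev_sub Z a n : eval Z subP (pair a n) (a - n).
Proof.
eapply ev_conv.
  apply: (ev_rec_gen (F := id) (G := fun a k w => w.-1)) => *; rewrite /P22; evs.
by elim: n => //= [|n ->]; lia.
Qed.
#[export] Hint Resolve ev_sub : evdb.

Definition sgn (x : nat) : nat := (0 < x).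
Definition sgP := PComp (PRec PZero (Kc 1)) (PPair PZero PId).
Lemma ev_sg Z x : eval Z sgP x (sgn x).
Proof.
econstructor; first by econstructor; constructor.
eapply ev_conv.
  apply: (ev_rec_gen (F := fun=> 0) (G := fun a k w => 1)) => *; evs.
by case: x.
Qed.
#[export] Hint Resolve ev_sg : evdb.

Definition eqb (a b : nat) : nat := (a == b).
Definition eqP' := comp2 subP (Kc 1) (PComp sgP (comp2 addP subP (comp2 subP PSnd PFst))).
Lemma ev_eqb Z a b : eval Z eqP' (pair a b) (eqb a b).
Proof.
rewrite /eqP' /eqb; evs; rewrite /sgn; case: (ltngtP a b) => h; try lia; by rewrite h subnn.
Qed.
#[export] Hint Resolve ev_eqb : evdb.

Definition exp2P := PComp (PRec (Kc 1) (comp2 addP P22 P22)) (PPair PZero PId).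
Lemma ev_exp2 Z x : eval Z exp2P x (2 ^ x).
Proof.
econstructor; first by econstructor; constructor.
eapply ev_conv.
  apply: (ev_rec_gen (F := fun=> 1) (G := fun a k w => w + w)) => *; rewrite /P22; evs.
by elim: x => /= [|x ->]; rewrite ?expnS; lia.
Qed.
#[export] Hint Resolve ev_exp2 : evdb.

Definition triP := PComp (PRec PZero (comp2 addP P22 (PComp PSucc P21))) (PPair PZero PId).
Lemma ev_tri Z x : eval Z triP x (tri x).
Proof.
econstructor; first by econstructor; constructor.
eapply ev_conv.
  apply: (ev_rec_gen (F := fun=> 0) (G := fun a k w => w + k.+1)) => *; rewrite /P22 /P21; evs.
by elim: x => /= [|x ->]; rewrite ?triS.
Qed.
#[export] Hint Resolve ev_tri : evdb.

Definition pairP := comp2 addP (PComp triP addP) PSnd.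
Lemma ev_pairP Z a b : eval Z pairP (pair a b) (pair a b).
Proof. rewrite /pairP; evs. Qed.
#[export] Hint Resolve ev_pairP : evdb.

Definition muh (r k : nat) := (1 - sgn r) + eqb r 1 * k.+2.
Definition mustep (R : nat -> nat) (a k st : nat) := st + (1 - sgn st) * muh (R (pair a k)) k.
Definition recstep (R : nat -> nat) (a k w : nat) := sgn w * R (pair a (pair k w.-1)).

Fixpoint run (p : prog) (s x : nat) : nat :=
  match p with
  | PZero => 1
  | PSucc => x.+2
  | PId => x.+1
  | PFst => (fst' x).+1
  | PSnd => (snd' x).+1
  | POracle => 1
  | PComp f g => sgn (run g s x) * run f s (run g s x).-1
  | PPair f g => sgn (run f s x) * sgn (run g s x) * (pair (run f s x).-1 (run g s x).-1).+1
  | PRec f g => recf (run f s) (recstep (run g s)) (fst' x) (snd' x)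
  | PMu f => (recf (fun=> 0) (mustep (run f s)) x s).-1
  end.

Lemma sgn_mulE a b c : sgn a * b = c.+1 -> a = a.-1.+1 /\ b = c.+1.
Proof. rewrite /sgn; case: a => //= a; lia. Qed.

Lemma mu_inv (R : nat -> nat) x j :
  let st := recf (fun=> 0) (mustep R) x j in
  (st = 0 /\ forall i, i < j -> 2 <= R (pair x i)) \/ st = 1 \/
  (exists m, [/\ st = m.+2, m < j, R (pair x m) = 1 & forall i, i < m -> 2 <= R (pair x i)]).
Proof.
elim: j => [|j IH] /=; first by left.
rewrite {1 3 5}/mustep.
case: IH => [[-> Hi]|[->|[m [-> Hmj Hm Hi]]]].
- rewrite /muh /eqb /sgn; case E: (R (pair x j)) => [|[|r]].
  + by right; left.
  + right; right; exists j; split => //; lia.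
  + left; split => // i; rewrite ltnS leq_eqVlt => /orP[/eqP->|/Hi//]; rewrite E.
    done.
- by right; left.
- right; right; exists m; split => //; rewrite /sgn /=; lia.
Qed.

Lemma mu_good (R : nat -> nat) x v j :
  R (pair x v) = 1 -> (forall i, i < v -> 2 <= R (pair x i)) ->
  recf (fun=> 0) (mustep R) x j = if j <= v then 0 else v.+2.
Proof.
move=> Hv Hi; elim: j => [|j IH] //=; rewrite IH /mustep.
case: (ltngtP j v) => h.
- have := Hi _ h.
  rewrite /muh /eqb /sgn; case: (R (pair x j)) => [|[|r]] //.
- rewrite /sgn /=; lia.
- rewrite h Hv /muh /eqb /sgn eqxx /=; lia.
Qed.

Lemma runA p : forall s x v, run p s x = v.+1 -> eval empty_oracle p x v.
Proof.
elim: p => [||||||f IHf g IHg|f IHf g IHg|f IHf g IHg|f IHf] s x v /=.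
- by case=> <-; constructor.
- by case=> <-; constructor.
- by case=> <-; constructor.
- by case=> <-; apply: ev_fst'.
- by case=> <-; apply: ev_snd'.
- by case=> <-; constructor.
- move=> /sgn_mulE [E1 E2]; econstructor; [apply: (IHg s); exact E1|exact: IHf E2].
- move=> H; have [E1 /sgn_mulE [E2 [E3]]] : run f s x = (run f s x).-1.+1 /\ sgn (run g s x) * (pair (run f s x).-1 (run g s x).-1).+1 = v.+1.
    by move: H; rewrite /sgn; case: (run f s x) => //= ?; rewrite mul1n.
  rewrite -E3; constructor; [exact: IHf E1| exact: IHg E2].
- rewrite -(pair_unpair x) fst'_pair snd'_pair; move: (fst' x) (snd' x) => a n.
  elim: n v => [|n IHn] v /=; first by move=> H; constructor; exact: IHf H.
  rewrite {1}/recstep => /sgn_mulE [E1 E2]; econstructor; [exact: IHn E1| exact: IHg E2].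
- move=> H.
  have [[E _]|[E|[m [E _ Hm Hi]]]] := mu_inv (run f s) x s; rewrite E /= in H; try done.
  case: H => <-; constructor; first exact: IHf Hm.
  move=> i /Hi; case E': (run f s (pair x i)) => [|[|k]] //= _.
  by exists k; apply: (IHf s); exact E'.
Qed.

Lemma fin_max (P : nat -> nat -> Prop) n :
  (forall m, m < n -> exists s0, forall s, s0 <= s -> P m s) ->
  exists s0, forall s, s0 <= s -> forall m, m < n -> P m s.
Proof.
elim: n => [|n IH] H; first by exists 0.
have [s1 H1] := IH (fun m hm => H m (ltnW hm)).
have [s2 H2] := H n (ltnSn n).
exists (maxn s1 s2) => s hs m; rewrite ltnS leq_eqVlt => /orP[/eqP->|hm].
- by apply: H2; lia.
- by apply: H1 => //; lia.
Qed.

Lemma orc_empty x : orc empty_oracle x = 0.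
Proof. by rewrite /orc; case: excluded_middle_informative. Qed.

Lemma runB p : forall x v, eval empty_oracle p x v ->
  exists s0, forall s, s0 <= s -> run p s x = v.+1.
Proof.
elim: p => [||||||f IHf g IHg|f IHf g IHg|f IHf g IHg|f IHf] x v.
- by inversion 1; exists 0.
- by inversion 1; exists 0.
- by inversion 1; exists 0.
- by move=> /inv_fst ->; exists 0.
- by move=> /inv_snd ->; exists 0.
- by move=> /inv_orc ->; exists 0; rewrite orc_empty.
- move=> /inv_comp [w [/IHg [s1 H1] /IHf [s2 H2]]]; exists (maxn s1 s2) => s hs /=.
  rewrite H1 ?H2 //=; [rewrite /sgn; lia|lia|lia].
- move=> /inv_pair [a [b [/IHf [s1 H1] /IHg [s2 H2] ->]]]; exists (maxn s1 s2) => s hs /=.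
  rewrite H1 ?H2 /=; [by rewrite /sgn /= !mul1n|lia|lia].
- rewrite -(pair_unpair x) /=; rewrite fst'_pair snd'_pair.
  move: (fst' x) (snd' x) => a n.
  elim: n v => [|n IHn] v.
  + move=> /inv_rec [[_ /IHf [s1 H1]]|[k [w [//]]]]; exists s1 => s hs /=; exact: H1.
  + move=> /inv_rec [[//]|[k [w [[<-] /IHn [s1 H1] /IHg [s2 H2]]]]].
    exists (maxn s1 s2) => s hs /=; rewrite /recstep H1 ?H2 /=; [by rewrite /sgn mul1n|lia|lia].
- move=> /inv_mu [/IHf [s1 H1] Hlt].
  have [s2 H2] := fin_max (P := fun m s => 2 <= run f s (pair x m))
     (fun m hm => match Hlt m hm with ex_intro k hk =>
        match IHf _ _ hk with ex_intro s0 h => ex_intro _ s0 (fun s hs => eq_ind_r (fun z => 2 <= z) (isT : 2 <= k.+2) (h s hs)) end end).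
  exists (maxn (maxn s1 s2) v.+1) => s hs /=.
  rewrite (@mu_good (run f s) x v s); first by rewrite leqNgt (_ : v < s) //; lia.
  + by apply: H1; lia.
  + by apply: H2; lia.
Qed.

Definition one_minus h := comp2 subP (Kc 1) h.
Definition P11 := PComp PFst PFst.
Definition P12 := PComp PSnd PFst.

Fixpoint clk (p : prog) : prog :=
  match p with
  | PZero => Kc 1
  | PSucc => PComp PSucc (PComp PSucc PFst)
  | PId => PComp PSucc PFst
  | PFst => PComp PSucc (PComp PFst PFst)
  | PSnd => PComp PSucc (PComp PSnd PFst)
  | POracle => Kc 1
  | PComp f g => comp2 mulP (PComp sgP (clk g)) (PComp (clk f) (PPair (PComp predP (clk g)) PSnd))
  | PPair f g => comp2 mulP (comp2 mulP (PComp sgP (clk f)) (PComp sgP (clk g)))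
                    (PComp PSucc (comp2 pairP (PComp predP (clk f)) (PComp predP (clk g))))
  | PRec f g => PComp (PRec (clk f)
         (comp2 mulP (PComp sgP P22)
            (PComp (clk g) (PPair (PPair P11 (PPair P21 (PComp predP P22))) P12))))
       (PPair (PPair P11 PSnd) (PComp PSnd PFst))
  | PMu f =>
      let r := PComp (clk f) (PPair (PPair P11 P21) P12) in
      let muhM := comp2 addP (one_minus (PComp sgP r))
                    (comp2 mulP (comp2 eqP' r (Kc 1)) (PComp PSucc (PComp PSucc P21))) in
      PComp predP (PComp (PRec PZero (comp2 addP P22 (comp2 mulP (one_minus (PComp sgP P22)) muhM)))
                     (PPair PId PSnd))
  end.

Lemma clk_spec Z p : forall x s, eval Z (clk p) (pair x s) (run p s x).
Proof.
elim: p => [||||||f IHf g IHg|f IHf g IHg|f IHf g IHg|f IHf] x s /=.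
- evs.
- evs.
- evs.
- evs.
- evs.
- evs.
- evs.
- evs.
- eapply ev_comp; first by rewrite /P11; eauto 40 with evdb.
  eapply ev_conv.
    apply: (ev_rec_gen (F := fun A => run f (snd' A) (fst' A))
                       (G := fun A k w => recstep (run g (snd' A)) (fst' A) k w)).
    + move=> A; rewrite -{1}(pair_unpair A); exact: IHf.
    + move=> A k w; rewrite /P11 /P12 /P21 /P22; evs.
  pr; elim: (snd' x) => /= [|n ->]; pr; by [].
- eapply ev_conv.
    eapply ev_comp; last exact: ev_pred.
    eapply ev_comp; first by eauto 40 with evdb.
    apply: (ev_rec_gen (F := fun=> 0)
                       (G := fun A k st => mustep (run f (snd' A)) (fst' A) k st)).
    + by move=> *; constructor.
    + move=> A k w; rewrite /P11 /P12 /P21 /P22 /one_minus /mustep /muh; evs.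
  pr; congr (_.-1).
  have E : forall n, recf (fun=>0) (fun A k st => mustep (run f (snd' A)) (fst' A) k st) (pair x s) n
     = recf (fun=>0) (mustep (run f s)) x n by elim => /= [|n ->]; pr.
  exact: E.
Qed.

Definition agstep (Z : nat -> Prop) (st : nat) :=
  pair (snd' (fst' st).-1)
       (snd' st * (1 - sgn (fst' st) * (1 - eqb (orc Z (fst' (fst' (fst' st).-1))) (snd' (fst' (fst' st).-1))))).

Definition agree_run Z c := snd' (recf (fun a => pair a 1) (fun _ _ st => agstep Z st) c c).

Definition PredFst := PComp predP PFst.
Definition agM := comp2 pairP (PComp PSnd PredFst)
   (comp2 mulP PSnd (one_minus (comp2 mulP (PComp sgP PFst)
      (one_minus (comp2 eqP' (PComp POracle (PComp PFst (PComp PFst PredFst)))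
                              (PComp PSnd (PComp PFst PredFst))))))).
Definition agreeM := PComp PSnd (PComp (PRec (comp2 pairP PId (Kc 1)) (PComp agM P22)) (PPair PId PId)).

Lemma ev_agM Z st : eval Z agM st (agstep Z st).
Proof. rewrite /agM /one_minus /PredFst /agstep; evs. Qed.
#[export] Hint Resolve ev_agM : evdb.

Lemma ev_agree Z c : eval Z agreeM c (agree_run Z c).
Proof.
rewrite /agreeM /agree_run.
eapply ev_comp; last exact: ev_snd'.
eapply ev_comp; first by econstructor; constructor.
apply: ev_rec_gen => *; rewrite /P22; evs.
Qed.
#[export] Hint Resolve ev_agree : evdb.

Fixpoint allok Z (s : seq (nat * bool)) : nat :=
  if s is (x, b) :: s' then eqb (orc Z x) b * allok Z s' else 1.

Lemma fun_code_size s : size s <= fun_code s.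
Proof.
elim: s => [|[x b] s IH] //=; have := pair_geq_r (pair x b) (fun_code s); lia.
Qed.

Lemma iter_fix Z ok j : iter j (agstep Z) (pair 0 ok) = pair 0 ok.
Proof.
elim: j => //= j ->; rewrite /agstep fst'_pair snd'_pair /sgn /=; congr pair; lia.
Qed.

Lemma eqb01 a b : eqb a b <= 1.
Proof. by rewrite /eqb; case: (a == b). Qed.

Lemma iter_ag Z s : forall ok j, size s <= j ->
  iter j (agstep Z) (pair (fun_code s) ok) = pair 0 (ok * allok Z s).
Proof.
elim: s => [|[x b] s IH] ok j /=.
- by rewrite muln1 iter_fix.
- case: j => // j; rewrite ltnS => hj; rewrite iterSr.
  rewrite {2}/agstep; pr; rewrite /sgn /= IH //.
  congr pair; have := eqb01 (orc Z x) b; case: (eqb _ _) => [|[|]] //= _; lia.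
Qed.

Lemma recf_iter (F : nat -> nat) (h : nat -> nat) a n :
  recf F (fun _ _ st => h st) a n = iter n h (F a).
Proof. by elim: n => //= n ->. Qed.

Lemma agree_run_code Z s : agree_run Z (fun_code s) = allok Z s.
Proof.
by rewrite /agree_run recf_iter iter_ag ?fun_code_size // snd'_pair mul1n.
Qed.

Lemma orc_true Z x : Z x -> orc Z x = 1.
Proof. by rewrite /orc; case: excluded_middle_informative. Qed.
Lemma orc_false Z x : ~ Z x -> orc Z x = 0.
Proof. by rewrite /orc; case: excluded_middle_informative. Qed.

Lemma allokP Z s : allok Z s = 1 <-> agrees s Z.
Proof.
rewrite /agrees; elim: s => [|[x b] s IH] /=; first by split => // _ ? ?.
have E : eqb (orc Z x) b = 1 <-> (Z x <-> b = true).
  case: (classic (Z x)) => h.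
  - rewrite orc_true // /eqb; case: b => //=; split => // [[/(_ h)]] //.
  - rewrite orc_false // /eqb; case: b => //=; split => // [[_ /(_ erefl)]] //.
have h1 := eqb01 (orc Z x) b.
have h2 : allok Z s <= 1.
  elim: (s) => //= [[x' b'] s'] hh; have := eqb01 (orc Z x') b'; nia.
split.
- move=> H x' b'; rewrite in_cons => /orP[/eqP[-> ->]|hin].
  + apply/E; lia.
  + have: allok Z s = 1 by lia.
    by move/IH; apply.
- move=> H.
  have ->: eqb (orc Z x) b = 1 by apply/E; apply: H; rewrite mem_head.
  rewrite mul1n; apply/IH => x' b' hin; apply: H; by rewrite in_cons hin orbT.
Qed.

#[export] Hint Resolve clk_spec : evdb.

Definition Gm (P : prog) := one_minus (comp2 mulP
   (comp2 mulP (PComp sgP (PComp (clk P) (PPair P21 P22)))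
               (comp2 eqP' (PComp PSnd (PComp PSnd P21)) PFst))
   (PComp agreeM (PComp PFst (PComp PSnd P21)))).

Definition gval Z P a t :=
  1 - sgn (run P (snd' t) (fst' t)) * eqb (snd' (snd' (fst' t))) a * agree_run Z (fst' (snd' (fst' t))).

Lemma ev_G Z P a t : eval Z (Gm P) (pair a t) (gval Z P a t).
Proof. rewrite /Gm /one_minus /gval /P21 /P22; evs. Qed.

Definition Qp P := PMu (Gm P).
Definition Qn P n := PComp (Qp P) (PPair (Kc n) PId).

Lemma Qn_iff Z P n y : (exists v, eval Z (Qn P n) y v) <-> exists t, gval Z P (pair n y) t = 0.
Proof.
split.
- move=> [v /inv_comp [w [/inv_pair [a [b [ha hb ->]]] /inv_mu [h _]]]].
  have ea : a = n by apply: eval_det ha (ev_Kc _ _ _).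
  have eb : b = y by inversion hb.
  subst.
  exists v; exact: eval_det (ev_G _ _ _ _) h.
- move=> hex.
  have hex' : exists t, (gval Z P (pair n y) t == 0) by case: hex => t h; exists t; apply/eqP.
  have [m /eqP Pm Hmin] := find_ex_minn hex'.
  exists m; econstructor; first by econstructor; [exact: ev_Kc| constructor].
  constructor; first by rewrite -Pm; exact: ev_G.
  move=> i hi; exists 0.
  have: gval Z P (pair n y) i != 0.
    by apply/negP => /Hmin; rewrite leqNgt hi.
  have: gval Z P (pair n y) i <= 1 by rewrite /gval; lia.
  case E: (gval _ _ _ _) => [|[|]] // _ _; rewrite -E; exact: ev_G.
Qed.

Lemma fun_code_inj s1 s2 : fun_code s1 = fun_code s2 -> s1 = s2.
Proof.
elim: s1 s2 => [|[x b] s IH] [|[x' b'] s'] //=.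
case=> /pair_inj [/pair_inj [-> hb] /IH ->].
by congr ((_, _) :: _); case: b b' hb => [] [].
Qed.

Lemma axiom_code_inj l s y l' s' y' :
  axiom_code l s y = axiom_code l' s' y' -> [/\ l = l', s = s' & y = y'].
Proof.
by rewrite /axiom_code => /pair_inj [-> /pair_inj [/fun_code_inj -> ->]].
Qed.

Lemma col_lt_iff l x : col_lt l x <-> fst' x < l.
Proof.
split; first by move=> [m [y [-> h]]]; rewrite fst'_pair.
by move=> h; exists (fst' x), (snd' x); rewrite pair_unpair.
Qed.
Lemma col_ge_iff l x : col_ge l x <-> l <= fst' x.
Proof.
split; first by move=> [m [y [-> h]]]; rewrite fst'_pair.
by move=> h; exists (fst' x), (snd' x); rewrite pair_unpair.
Qed.

Definition goodA (A : nat -> Prop) := forall n, A n ->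
     exists l sigma y, n = axiom_code l sigma y /\ valid_axiom l sigma y.

Lemma ax_valid A (h : goodA A) l s y : A (axiom_code l s y) -> valid_axiom l s y.
Proof.
move=> hA; have [l' [s' [y' [/axiom_code_inj [-> -> ->] hv]]]] := h _ hA; exact hv.
Qed.

Lemma ax_fst A (h : goodA A) l s y : A (axiom_code l s y) ->
  l <= fst' y /\ forall x b, (x, b) \in s -> fst' x < l.
Proof.
move=> /(ax_valid h) [_ [hs /col_ge_iff hy]]; split => // x b /hs /col_lt_iff //.
Qed.

Lemma agrees_ext s (C1 C2 : nat -> Prop) :
  (forall x b, (x, b) \in s -> (C1 x <-> C2 x)) -> (agrees s C1 <-> agrees s C2).
Proof.
move=> H; rewrite /agrees; split => H' x b hin; rewrite -(H' x b hin) (H x b hin) //.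
Qed.

Fixpoint D (A : nat -> Prop) k : nat -> Prop :=
  if k is k'.+1 then fun y => exists l s, A (axiom_code l s y) /\ agrees s (D A k')
  else fun _ => False.
Definition Cof A y := D A (fst' y).+1 y.

Lemma D_C A (h : goodA A) : forall k y, fst' y < k -> (D A k y <-> Cof A y).
Proof.
elim/ltn_ind => -[|k] IH y //= hy.
rewrite /Cof /=.
split => -[l [s [hA hag]]]; exists l, s; split => //;
  have [hl hs] := ax_fst h hA; apply: (iffLR (agrees_ext _)) hag => x b hin;
  have hx := hs x b hin.
- rewrite (IH k) // ?(IH (fst' y)) //; lia.
- rewrite (IH k) // ?(IH (fst' y)) //; lia.
Qed.

Lemma Cof_gen A (h : goodA A) : generated_by A (Cof A).
Proof.
move=> y; rewrite {1}/Cof /=.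
split => -[l [s [hA hag]]]; exists l, s; split => //;
  have [hl hs] := ax_fst h hA; apply: (iffLR (agrees_ext _)) hag => x b hin;
  have hx := hs x b hin.
- rewrite (D_C h) //; lia.
- rewrite (D_C h) //; lia.
Qed.

Lemma gen_unique A (h : goodA A) C1 C2 : generated_by A C1 -> generated_by A C2 ->
  forall x, C1 x <-> C2 x.
Proof.
move=> h1 h2.
suff H : forall m x, fst' x < m -> (C1 x <-> C2 x) by move=> x; exact: (H (fst' x).+1).
elim=> [|m IH] x // hx.
rewrite h1 h2; split => -[l [s [hA hag]]]; exists l, s; split => //;
  have [hl hs] := ax_fst h hA; apply: (iffLR (agrees_ext _)) hag => x' b hin;
  have hx' := hs x' b hin; rewrite IH //; lia.
Qed.

Fixpoint labs (p : prog) : seq nat :=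
  match p with
  | PZero => [:: 1; 0] | PSucc => [:: 2; 0] | PId => [:: 3; 0]
  | PFst => [:: 4; 0] | PSnd => [:: 5; 0] | POracle => [:: 6; 0]
  | PComp f g => 7 :: labs f ++ labs g ++ [:: 0]
  | PPair f g => 8 :: labs f ++ labs g ++ [:: 0]
  | PRec f g => 9 :: labs f ++ labs g ++ [:: 0]
  | PMu f => 10 :: labs f ++ [:: 0]
  end.

Lemma encode_labs p : GenTree.encode (prog_enc p) = map inl (labs p).
Proof.
elim: p => //= [f IHf g IHg|f IHf g IHg|f IHf g IHg|f IHf];
  by rewrite ?IHf ?IHg -?cats1 ?cats0 ?map_cat ?catA.
Qed.

Fact pk_key : unit. Proof. by []. Qed.
Definition pk := locked_with pk_key (fun k : nat => 3 * 2 ^ (2 ^ k)).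
Lemma pkE k : pk k = 3 * 2 ^ (2 ^ k). Proof. by rewrite /pk unlock. Qed.

Lemma pickle_inl k : pickle (inl k : nat + nat) = pk k.
Proof.
have -> : pickle (inl k : nat + nat) = CodeSeq.code [:: CodeSeq.code [:: k]; 0] by [].
rewrite /CodeSeq.code /= pkE muln1 expn0 mulnC; by [].
Qed.

Lemma pickle_prog p : pickle p = CodeSeq.code (map pk (labs p)).
Proof.
have -> : pickle p = CodeSeq.code (map pickle (GenTree.encode (prog_enc p))) by [].
by rewrite encode_labs -map_comp; congr CodeSeq.code; apply: eq_map => k /=; rewrite pickle_inl.
Qed.

Fact Bt_key : unit. Proof. by []. Qed.
Definition Bt := locked_with Bt_key (fun l : seq nat => sumn (map (fun a => (pk a).+1) l)).
Fact M_key : unit. Proof. by []. Qed.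
Definition M := locked_with M_key (fun l : seq nat => CodeSeq.code (map pk l)).
Lemma BtE l : Bt l = sumn (map (fun a => (pk a).+1) l). Proof. by rewrite /Bt unlock. Qed.
Lemma ME l : M l = CodeSeq.code (map pk l). Proof. by rewrite /M unlock. Qed.
Lemma Bt_cat l1 l2 : Bt (l1 ++ l2) = Bt l1 + Bt l2.
Proof. by rewrite !BtE map_cat sumn_cat. Qed.
Lemma M_cons a l : M (a :: l) = 2 ^ pk a * (M l).*2.+1.
Proof. by rewrite !ME. Qed.
Lemma Bt_cons a l : Bt (a :: l) = (pk a).+1 + Bt l.
Proof. by rewrite !BtE. Qed.
Lemma M_nil : M [::] = 0. Proof. by rewrite ME. Qed.
Lemma Bt_nil : Bt [::] = 0. Proof. by rewrite BtE. Qed.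

Lemma M_cat l1 l2 : M (l1 ++ l2) = M l1 + 2 ^ Bt l1 * M l2.
Proof.
elim: l1 => [|a l IH] /=; first by rewrite M_nil Bt_nil mul1n.
rewrite !M_cons IH Bt_cons expnD expnS; lia.
Qed.

Definition pkM a := comp2 mulP (Kc 3) (PComp exp2P (PComp exp2P (Kc a))).
Lemma ev_pkM Z a x : eval Z (pkM a) x (pk a).
Proof. rewrite /pkM pkE; evs. Qed.
#[export] Hint Resolve ev_pkM : evdb.

Fixpoint codeM (l : seq nat) : prog :=
  if l is a :: l' then comp2 mulP (PComp exp2P (pkM a)) (PComp PSucc (comp2 addP (codeM l') (codeM l')))
  else Kc 0.
Fixpoint btM (l : seq nat) : prog :=
  if l is a :: l' then comp2 addP (PComp PSucc (pkM a)) (btM l') else Kc 0.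

Lemma ev_codeM Z l x : eval Z (codeM l) x (M l).
Proof.
elim: l => [|a l IH] /=; first by rewrite M_nil; constructor.
rewrite M_cons; evs.
Qed.
Lemma ev_btM Z l x : eval Z (btM l) x (Bt l).
Proof.
elim: l => [|a l IH] /=; first by rewrite Bt_nil; constructor.
rewrite Bt_cons; evs.
Qed.
#[export] Hint Resolve ev_codeM ev_btM : evdb.

Definition Kstep := comp2 pairP
   (comp2 addP (codeM [:: 7; 2; 0]) (comp2 mulP (PComp exp2P (btM [:: 7; 2; 0]))
      (comp2 addP (PComp PFst P22) (comp2 mulP (PComp exp2P (PComp PSnd P22)) (codeM [:: 0])))))
   (comp2 addP (comp2 addP (btM [:: 7; 2; 0]) (PComp PSnd P22)) (btM [:: 0])).
Definition Kst := PComp (PRec (comp2 pairP (codeM [:: 1; 0]) (btM [:: 1; 0])) Kstep) (PPair PZero PId).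

Lemma labs_Kc n : labs (Kc n.+1) = [:: 7; 2; 0] ++ labs (Kc n) ++ [:: 0].
Proof. by []. Qed.

Lemma ev_Kst Z n : eval Z Kst n (pair (M (labs (Kc n))) (Bt (labs (Kc n)))).
Proof.
eapply ev_comp; first by econstructor; constructor.
eapply ev_conv.
  apply: (ev_rec_gen (F := fun=> pair (M [:: 1; 0]) (Bt [:: 1; 0]))
    (G := fun a k w => pair (M [:: 7; 2; 0] + 2 ^ Bt [:: 7; 2; 0] * (fst' w + 2 ^ snd' w * M [:: 0]))
                            (Bt [:: 7; 2; 0] + snd' w + Bt [:: 0]))).
  - move=> a; evs.
  - move=> a k w; rewrite /Kstep /P22; evs.
elim: n => [|n IH]; first by [].
rewrite [recf _ _ _ _]/= IH; pr.
rewrite labs_Kc !M_cat !Bt_cat; congr pair; lia.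
Qed.

#[export] Hint Resolve ev_Kst : evdb.
Definition pre P := 7 :: labs (Qp P) ++ [:: 8].
Definition suf := [:: 3; 0; 0; 0].

Definition Fm P := comp2 addP (codeM (pre P)) (comp2 mulP (PComp exp2P (btM (pre P)))
   (comp2 addP (PComp PFst Kst) (comp2 mulP (PComp exp2P (PComp PSnd Kst)) (codeM suf)))).

Lemma labs_Qn P n : labs (Qn P n) = pre P ++ labs (Kc n) ++ suf.
Proof.
have -> : labs (Qn P n) = 7 :: labs (Qp P) ++ (8 :: labs (Kc n) ++ [:: 3; 0] ++ [:: 0]) ++ [:: 0] by [].
rewrite /pre /suf cat_cons -catA; do 2 f_equal; by rewrite /= -!catA.
Qed.

Lemma ev_Fm Z P n : eval Z (Fm P) n (pickle (Qn P n)).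
Proof.
rewrite pickle_prog -ME labs_Qn !M_cat /Fm; evs.
Qed.

Lemma allok_le1 Z s : allok Z s <= 1.
Proof. elim: s => //= [[x' b'] s'] hh; have := eqb01 (orc Z x') b'; nia. Qed.

Lemma agrees_below s (C : nat -> Prop) n :
  (forall x b, (x, b) \in s -> fst' x < n) -> (agrees s (below C n) <-> agrees s C).
Proof.
move=> H; apply: agrees_ext => x b /H hx; rewrite /below col_lt_iff; tauto.
Qed.

Lemma col_iff A (h : goodA A) P (hP : forall c, A c <-> exists s, run P s c <> 0)
  C (hC : generated_by A C) n y :
  C (pair n y) <-> exists t, gval (below C n) P (pair n y) t = 0.
Proof.
split.
- move/hC => [l [s [hA hag]]].
  have [hl hs] := ax_fst h hA; rewrite fst'_pair in hl.
  have [s0 hs0] := (hP _).1 hA.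
  exists (pair (axiom_code l s (pair n y)) s0).
  rewrite /gval /axiom_code; pr; rewrite -/(axiom_code l s (pair n y)) agree_run_code.
  have -> : allok (below C n) s = 1.
    apply/allokP; apply/agrees_below => // x b /hs; lia.
  have -> : eqb (pair n y) (pair n y) = 1 by rewrite /eqb eqxx.
  by move: hs0; rewrite /sgn; case: (run _ _ _).
- move=> [t ht].
  have : 0 < sgn (run P (snd' t) (fst' t)) * eqb (snd' (snd' (fst' t))) (pair n y) *
                agree_run (below C n) (fst' (snd' (fst' t))) by rewrite /gval in ht; lia.
  rewrite !muln_gt0 => /andP [/andP [h1 h2] h3].
  have hA : A (fst' t) by apply/hP; exists (snd' t); move: h1; rewrite /sgn; case: (run _ _ _).
  have [l [s [y' [Ec hv]]]] := h _ hA.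
  move: h2 h3 hA; rewrite Ec /axiom_code; pr; rewrite -/(axiom_code l s y').
  rewrite /eqb; case: eqP => // -> _; rewrite agree_run_code => h3 hA.
  apply/hC; exists l, s; split => //.
  have [hl hs] := ax_fst h hA; rewrite fst'_pair in hl.
  apply/(agrees_below _ (n := n)); first by move=> x b /hs; lia.
  apply/allokP; have := allok_le1 (below C n) s; lia.
Qed.

Theorem lemma2p2 (A : nat -> Prop)
  (hAce : ce A)
  (hAax : forall n, A n ->
     exists l sigma y, n = axiom_code l sigma y /\ valid_axiom l sigma y) :
  (exists C, generated_by A C /\ REA_omega C) /\
  (forall C1 C2, generated_by A C1 -> generated_by A C2 -> forall x, C1 x <-> C2 x).
Proof.
have hg : goodA A := hAax.
split; last by move=> C1 C2; apply: gen_unique.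
case: hAce => e he.
set P := phi e.
have hP : forall c, A c <-> exists s, run P s c <> 0.
  move=> c; rewrite he /W; split.
  - by move=> [v /runB [s0 H]]; exists s0; rewrite H.
  - move=> [s H]; exists (run P s c).-1; apply: (runA (s := s)); move: H; by case: (run P s c).
exists (Cof A); split; first exact: (Cof_gen hg).
exists (fun n => pickle (Qn P n)); split.
- by exists (pickle (Fm P)) => n; rewrite /phi pickleK /=; exact: ev_Fm.
- move=> n y; rewrite /column /W /phi pickleK /=.
  rewrite (Qn_iff (below (Cof A) n) P n y); apply: (col_iff hg hP); exact: (Cof_gen hg).
Qed.
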